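(* Let $x=\{x_i^t\}$ and $y=\{y_i^t\}$ be two arbitrary, possibly fractional, allocations and let $X_i^t=\sum_{\tau=1}^tx_i^\tau$. Then for every transaction $i$ and every horizon $T$, $$\sum_{t=1}^Tx_i^tv_i^t\ge\sum_{t=1}^TX_i^ty_i^tv_i^t.$$
   Context: Online block packing: $m$ resources with capacities $B_j>0$; transactions $i$ with arrival time $a_i\in\{1,2,\dots\}$, base value $v_i\ge0$, discount $\rho_i\in[0,1]$, demand $w_i\in\mathbb{R}_+^m$; $v_i^t:=v_i(1-\rho_i)^{t-a_i}$. A fractional allocation is $\{x_i^t\}$ with $x_i^t\in[0,1]$, $x_i^t=0$ for $t<a_i$, $\sum_tx_i^t\le1$, and $\sum_iw_{ij}x_i^t\le B_j$ for all $t,j$. *)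

(* Defs.v *)
From HB Require Import structures.
From mathcomp Require Import all_boot all_order all_algebra.
Set Implicit Arguments. Unset Strict Implicit. Unset Printing Implicit Defensive.
Import Order.TTheory GRing.Theory Num.Theory.
Local Open Scope ring_scope.

(* Discounted value v_i^t = v_i (1 - rho_i)^(t - a_i).  The exponent uses
   truncated nat subtraction; for t < a_i every allocation is 0 anyway. *)
Definition vt {R : realFieldType} {I : Type} (v rho : I -> R) (a : I -> nat)
  (i : I) (t : nat) : R :=
  v i * (1 - rho i) ^+ (t - a i).

(* Time steps are
   t = 1, 2, ...; the constraint sum_t x_i^t <= 1 over the infinite horizon
   is stated via all finite partial sums (terms are nonnegative). *)
Definition is_alloc {R : realFieldType} {I : finType} {m : nat}
  (B : 'I_m -> R) (w : I -> 'I_m -> R) (a : I -> nat)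
  (x : I -> nat -> R) : Prop :=
  [/\ (forall i t, 0 <= x i t <= 1),
      (forall i t, (t < a i)%N -> x i t = 0),
      (forall i T, \sum_(1 <= t < T.+1) x i t <= 1) &
      (forall t j, \sum_(i : I) w i j * x i t <= B j)].

Definition cumul {R : realFieldType} {I : Type} (x : I -> nat -> R)
  (i : I) (t : nat) : R :=
  \sum_(1 <= tau < t.+1) x i tau.

(* Main.v *)
Require Import Defs.
From HB Require Import structures.
From mathcomp Require Import all_boot all_order all_algebra.
Import Order.TTheory GRing.Theory Num.Theory.
Local Open Scope ring_scope.

Theorem lemma2 (R : realFieldType) (I : finType) (m : nat)
  (B : 'I_m -> R) (a : I -> nat) (v rho : I -> R) (w : I -> 'I_m -> R)
  (hB : forall j, 0 < B j)
  (ha : forall i, (1 <= a i)%N)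
  (hv : forall i, 0 <= v i)
  (hrho : forall i, 0 <= rho i <= 1)
  (hw : forall i j, 0 <= w i j)
  (x y : I -> nat -> R)
  (hx : is_alloc B w a x) (hy : is_alloc B w a y) :
  forall (i : I) (T : nat),
    \sum_(1 <= t < T.+1) cumul x i t * y i t * vt v rho a i t
      <= \sum_(1 <= t < T.+1) x i t * vt v rho a i t.
Proof.
move=> i T.
case: hx => hx01 _ _ _; case: hy => hy01 _ hy1 _.
set V := vt v rho a i.
have V0 : forall t, 0 <= V t.
  move=> t; rewrite /V /vt; apply: mulr_ge0 => //; apply: exprn_ge0.
  by case/andP: (hrho i) => _ h; rewrite subr_ge0.
have Vmon : forall s t, (s <= t)%N -> V t <= V s.
  move=> s t hst; rewrite /V /vt; apply: ler_wpM2l => //.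
  case/andP: (hrho i) => h0 h1.
  apply: ler_wiXn2l; first by rewrite subr_ge0.
    by rewrite lerBlDr lerDl.
  by apply: leq_sub2r.
have x0 : forall t, 0 <= x i t by move=> t; case/andP: (hx01 i t).
have y0 : forall t, 0 <= y i t by move=> t; case/andP: (hy01 i t).
apply: (@le_trans _ _ (\sum_(1 <= t < T.+1) \sum_(1 <= s < T.+1)
   (if (s < t.+1)%N then x i s * y i t * V s else 0))).
  apply: ler_sum_nat => t /andP[_ htT].
  rewrite /cumul (big_nat_widen _ _ _ _ _ htT) mulr_suml mulr_suml.
  rewrite big_mkcond /=.
  apply: ler_sum => s _; case: ifP => hs //.
  apply: ler_wpM2l; first by apply: mulr_ge0.
  by apply: Vmon.
rewrite exchange_big_nat /=.
apply: ler_sum_nat => s _.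
apply: (@le_trans _ _ (x i s * V s * \sum_(1 <= t < T.+1) y i t)).
  rewrite mulr_sumr; apply: ler_sum => t _; case: ifP => _.
    by rewrite -mulrA [y i t * _]mulrC mulrA.
  by apply: mulr_ge0; [apply: mulr_ge0|].
rewrite -[X in _ <= X]mulr1; apply: ler_wpM2l; first by apply: mulr_ge0.
exact: hy1.
Qed.
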